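(* Let $A$ be a commutative noetherian local ring, let $x,y\in A$ be an exact pair of zero divisors, and let $a\in A$. Then there is an isomorphism of $A$-algebras $\operatorname{End}_A(G_a)^{\mathrm{op}}\cong\operatorname{End}_A(H_a)$. In particular, $G_a$ is indecomposable if and only if $H_a$ is indecomposable.
   Context: Two non-units $x,y\in A$ form an exact pair of zero divisors if $\operatorname{Ann}_A(x)=(y)$ and $\operatorname{Ann}_A(y)=(x)$. For $a\in A$, let $\gamma_a=\begin{pmatrix} x & a\\ 0 & y\end{pmatrix}$ and $\eta_a=\begin{pmatrix} y & -a\\ 0 & x\end{pmatrix}$, viewed as $A$-linear maps $A^2\to A^2$ acting on column vectors, and set $G_a=\operatorname{Coker}\gamma_a$, $H_a=\operatorname{Coker}\eta_a$. *)

(* Defs.v *)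
From HB Require Import structures.
From mathcomp Require Import all_boot all_order all_algebra.
Set Implicit Arguments.
Unset Strict Implicit.
Unset Printing Implicit Defensive.
Import GRing.Theory.
Local Open Scope ring_scope.

Section RingDefs.
Variable A : comNzRingType.

Definition is_ideal (I : A -> Prop) : Prop :=
  [/\ I 0, (forall u v, I u -> I v -> I (u + v)) & (forall r u, I u -> I (r * u))].

Definition is_maximal_ideal (I : A -> Prop) : Prop :=
  [/\ is_ideal I, ~ I 1 &
      forall J : A -> Prop, is_ideal J -> (forall u, I u -> J u) ->
        J 1 \/ (forall u, J u -> I u)].

Definition local_ring : Prop :=
  exists m : A -> Prop, is_maximal_ideal m /\
    forall m' : A -> Prop, is_maximal_ideal m' -> forall u, m' u <-> m u.

Definition noetherian_ring : Prop :=
  forall I : A -> Prop, is_ideal I ->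
    exists s : seq A, forall u, I u <->
      exists c : 'I_(size s) -> A, u = \sum_(i < size s) c i * s`_i.

Definition nonunit (u : A) : Prop := ~ exists v, u * v = 1.

Definition ann_is_principal (u v : A) : Prop :=
  forall z, z * u = 0 <-> exists r, z = r * v.

Definition exact_pair (x y : A) : Prop :=
  [/\ nonunit x, nonunit y, ann_is_principal x y & ann_is_principal y x].

Definition mx2 (p q r s : A) : 'M[A]_2 :=
  \matrix_(i < 2, j < 2)
    (if (i : nat) == 0%N then (if (j : nat) == 0%N then p else q)
     else (if (j : nat) == 0%N then r else s)).

Definition gamma_mx (x y a : A) : 'M[A]_2 := mx2 x a 0 y.
Definition eta_mx (x y a : A) : 'M[A]_2 := mx2 y (- a) 0 x.

Definition is_coker (g : 'M[A]_2) (M : lmodType A) (p : 'cV[A]_2 -> M) : Prop :=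
  [/\ linear p, (forall m : M, exists v, p v = m) &
      forall v, p v = 0 <-> exists w, v = g *m w].

(** A-linear endomorphisms, compared extensionally *)
Definition endo (M : lmodType A) (f : M -> M) : Prop := linear f.

Definition op_algebra_iso (M N : lmodType A) (Phi : (M -> M) -> (N -> N)) : Prop :=
  (forall f, endo f -> endo (Phi f)) /\
  (forall f g, endo f -> endo g -> f =1 g -> Phi f =1 Phi g) /\
  (forall f g, endo f -> endo g -> Phi f =1 Phi g -> f =1 g) /\
  (forall h, endo h -> exists2 f, endo f & Phi f =1 h) /\
  (forall f g, endo f -> endo g ->
     Phi (fun m => f m + g m) =1 (fun n => Phi f n + Phi g n)) /\
  (forall (c : A) f, endo f -> Phi (fun m => c *: f m) =1 (fun n => c *: Phi f n)) /\
  Phi id =1 id /\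
  (forall f g, endo f -> endo g -> Phi (f \o g) =1 (Phi g \o Phi f)).

Definition opEnd_iso_End (M N : lmodType A) : Prop :=
  exists Phi : (M -> M) -> (N -> N), op_algebra_iso Phi.

Definition submodule (M : lmodType A) (S : M -> Prop) : Prop :=
  [/\ S 0, (forall u v, S u -> S v -> S (u + v)) & (forall (c : A) u, S u -> S (c *: u))].

Definition indecomposable (M : lmodType A) : Prop :=
  (exists m : M, m <> 0) /\
  forall S T : M -> Prop, submodule S -> submodule T ->
    (forall m, S m -> T m -> m = 0) ->
    (forall m, exists2 s, S s & exists2 t, T t & m = s + t) ->
    (forall m, S m -> m = 0) \/ (forall m, T m -> m = 0).

End RingDefs.

(* Main.v *)
Require Import Defs.
From HB Require Import structures.
From mathcomp Require Import all_boot all_order all_algebra ring.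
From Stdlib Require Import Classical ClassicalEpsilon FunctionalExtensionality.
Set Implicit Arguments. Unset Strict Implicit. Unset Printing Implicit Defensive.
Import GRing.Theory.
Local Open Scope ring_scope.

Section Mx.
Variable A : comNzRingType.
Implicit Types p q r s : A.

Lemma mx2E (X : 'M[A]_2) : X = mx2 (X 0 0) (X 0 1) (X 1 0) (X 1 1).
Proof. apply/matrixP => i j; rewrite mxE.
by case: i => [[|[|i]] Hi] //; case: j => [[|[|j]] Hj] //=; congr (X _ _); apply: val_inj.
Qed.
Lemma mul_mx2 p q r s p' q' r' s' :
  mx2 p q r s *m mx2 p' q' r' s' =
  mx2 (p * p' + q * r') (p * q' + q * s') (r * p' + s * r') (r * q' + s * s').
Proof. apply/matrixP => i j; rewrite !mxE big_ord_recl big_ord1 !mxE /=.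
by case: i => [[|[|i]] Hi] //; case: j => [[|[|j]] Hj].
Qed.
Lemma mx2_inj p q r s p' q' r' s' : mx2 p q r s = mx2 p' q' r' s' :> 'M[A]_2 ->
  [/\ p = p', q = q', r = r' & s = s'].
Proof. move=> /matrixP H.
by move: (H 0 0) (H 0 1) (H 1 0) (H 1 1); rewrite !mxE.
Qed.
Lemma add_mx2 p q r s p' q' r' s' : mx2 p q r s + mx2 p' q' r' s' = mx2 (p+p') (q+q') (r+r') (s+s') :> 'M[A]_2.
Proof. apply/matrixP => i j; rewrite !mxE; by case: ifP; case: ifP. Qed.
Lemma scale_mx2 c p q r s : c *: mx2 p q r s = mx2 (c * p) (c * q) (c * r) (c * s) :> 'M[A]_2.
Proof. apply/matrixP => i j; rewrite !mxE; by case: ifP; case: ifP. Qed.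
Lemma mx2_1 : 1%:M = mx2 1 0 0 1 :> 'M[A]_2.
Proof. apply/matrixP => i j; rewrite !mxE.
by case: i => [[|[|i]] Hi] //; case: j => [[|[|j]] Hj].
Qed.
Lemma mx2_0 : 0 = mx2 0 0 0 0 :> 'M[A]_2.
Proof. apply/matrixP => i j; rewrite !mxE; by case: ifP; case: ifP. Qed.

Definition col2 p q : 'cV[A]_2 := \matrix_(i < 2, j < 1) (if (i : nat) == 0%N then p else q).
Lemma col2E (v : 'cV[A]_2) : v = col2 (v 0 0) (v 1 0).
Proof. apply/matrixP => i j; rewrite mxE.
by case: i => [[|[|i]] Hi] //; case: j => [[|j] Hj] //=; congr (v _ _); apply: val_inj.
Qed.
Lemma mul_mx2_col2 p q r s p' r' :
  mx2 p q r s *m col2 p' r' = col2 (p * p' + q * r') (r * p' + s * r').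
Proof. apply/matrixP => i j; rewrite !mxE big_ord_recl big_ord1 !mxE /=.
by case: i => [[|[|i]] Hi].
Qed.
Lemma col2_inj p q p' q' : col2 p q = col2 p' q' -> p = p' /\ q = q'.
Proof. move=> /matrixP H. by move: (H 0 0) (H 1 0); rewrite !mxE. Qed.
Lemma add_col2 p q p' q' : col2 p q + col2 p' q' = col2 (p + p') (q + q').
Proof. apply/matrixP => i j; rewrite !mxE; by case: ifP. Qed.
Lemma scale_col2 c p q : c *: col2 p q = col2 (c * p) (c * q).
Proof. apply/matrixP => i j; rewrite !mxE; by case: ifP. Qed.

Definition adj2 (X : 'M[A]_2) := mx2 (X 1 1) (- X 0 1) (- X 1 0) (X 0 0).
Lemma adj2_mx2 p q r s : adj2 (mx2 p q r s) = mx2 s (- q) (- r) p.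
Proof. by rewrite /adj2 !mxE. Qed.
Lemma adj2M X Y : adj2 (X *m Y) = adj2 Y *m adj2 X.
Proof. rewrite (mx2E X) (mx2E Y) mul_mx2 !adj2_mx2 mul_mx2; congr mx2; ring. Qed.
Lemma adj2D X Y : adj2 (X + Y) = adj2 X + adj2 Y.
Proof. rewrite (mx2E X) (mx2E Y) add_mx2 !adj2_mx2 add_mx2; congr mx2; ring. Qed.
Lemma adj2Z c X : adj2 (c *: X) = c *: adj2 X.
Proof. rewrite (mx2E X) scale_mx2 !adj2_mx2 scale_mx2; congr mx2; ring. Qed.
Lemma adj2K X : adj2 (adj2 X) = X.
Proof. by rewrite /adj2 !mxE /= !opprK -mx2E. Qed.
Lemma adj2_1 : adj2 1%:M = 1%:M.
Proof. by rewrite mx2_1 adj2_mx2 oppr0. Qed.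
Lemma adj2B X Y : adj2 (X - Y) = adj2 X - adj2 Y.
Proof. by rewrite adj2D -scaleN1r adj2Z scaleN1r. Qed.

Lemma lin0 (M N : lmodType A) (f : M -> N) : linear f -> f 0 = 0.
Proof. move=> Hf; have := Hf 1 0 0; rewrite !scale1r addr0 => H.
by apply: (addrI (f 0)); rewrite addr0 -H. Qed.
Lemma linD (M N : lmodType A) (f : M -> N) : linear f -> forall u v, f (u + v) = f u + f v.
Proof. by move=> Hf u v; rewrite -{1}[u]scale1r Hf scale1r. Qed.
Lemma linZ (M N : lmodType A) (f : M -> N) : linear f -> forall c u, f (c *: u) = c *: f u.
Proof. by move=> Hf c u; rewrite -[c *: u]addr0 Hf lin0 // addr0. Qed.
Lemma linB (M N : lmodType A) (f : M -> N) : linear f -> forall u v, f (u - v) = f u - f v.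
Proof. by move=> Hf u v; rewrite linD // -scaleN1r linZ // scaleN1r. Qed.
Lemma mk_lin (M N : lmodType A) (f : M -> N) :
  (forall u v, f (u + v) = f u + f v) -> (forall c u, f (c *: u) = c *: f u) -> linear f.
Proof. by move=> HD HZ c u v; rewrite HD HZ. Qed.

Section Coker.
Variables (m : 'M[A]_2) (M : lmodType A) (p : 'cV[A]_2 -> M).
Hypothesis cM : is_coker m p.

Lemma coker_eq u w : p u = p w <-> exists z, u - w = m *m z.
Proof. case: cM => lp _ ker. rewrite -ker linB //. split => [->|/eqP]; first by rewrite subrr.
by rewrite subr_eq0 => /eqP.
Qed.
Lemma coker_zero (Y : 'M[A]_2) (v : 'cV[A]_2) : p (m *m Y *m v) = 0.
Proof. case: cM => _ _ ker. by apply/ker; exists (Y *m v); rewrite mulmxA. Qed.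
Lemma coker_zero1 (v : 'cV[A]_2) : p (m *m v) = 0.
Proof. case: cM => _ _ ker. by apply/ker; exists v. Qed.
Lemma coker_mx (X : 'M[A]_2) : (forall v, p (X *m v) = 0) -> exists Y, X = m *m Y.
Proof. case: cM => _ _ ker H.
have [w0 Hw0] := (ker _).1 (H (col2 1 0)).
have [w1 Hw1] := (ker _).1 (H (col2 0 1)).
exists (mx2 (w0 0 0) (w1 0 0) (w0 1 0) (w1 1 0)).
move: Hw0 Hw1; rewrite (col2E w0) (col2E w1) (mx2E X) (mx2E m) !mul_mx2_col2 mul_mx2.
move=> /col2_inj [e1 e2] /col2_inj [e3 e4].
rewrite !mxE /=. congr mx2.
- by rewrite -e1; ring. - by rewrite -e3; ring. - by rewrite -e2; ring. - by rewrite -e4; ring.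
Qed.
Lemma coker_lift (f : M -> M) : linear f -> exists al, forall v, p (al *m v) = f (p v).
Proof. case: cM => lp sur _ Hf.
have [w0 Hw0] := sur (f (p (col2 1 0))).
have [w1 Hw1] := sur (f (p (col2 0 1))).
exists (mx2 (w0 0 0) (w1 0 0) (w0 1 0) (w1 1 0)) => v.
have -> : mx2 (w0 0 0) (w1 0 0) (w0 1 0) (w1 1 0) *m v = v 0 0 *: w0 + v 1 0 *: w1.
  rewrite [v]col2E mul_mx2_col2 [w0]col2E [w1]col2E !scale_col2 add_col2 !mxE /=.
  congr col2; ring.
have Hv : v = v 0 0 *: col2 1 0 + v 1 0 *: col2 0 1.
  by rewrite [LHS]col2E !scale_col2 add_col2 !mulr1 !mulr0 addr0 add0r.
transitivity (f (p (v 0 0 *: col2 1 0 + v 1 0 *: col2 0 1))); last by rewrite -Hv.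
by rewrite !(linD lp) !(linZ lp) Hw0 Hw1 (linD Hf) !(linZ Hf).
Qed.
End Coker.

Section Main.
Variables (x y a : A).
Hypotheses (hx : ann_is_principal x y) (hy : ann_is_principal y x).
Let g := mx2 x a 0 y.
Let e := mx2 y (- a) 0 x.

Lemma xy0 : x * y = 0.
Proof. by apply: (proj2 (hy x)); exists 1; rewrite mul1r. Qed.

Lemma ge0 : g *m e = 0.
Proof. have yx0 : y * x = 0 by rewrite mulrC xy0.
rewrite /g /e mul_mx2 mx2_0; congr mx2; rewrite ?xy0 ?yx0; ring. Qed.
Lemma eg0 : e *m g = 0.
Proof. have yx0 : y * x = 0 by rewrite mulrC xy0.
rewrite /g /e mul_mx2 mx2_0; congr mx2; rewrite ?xy0 ?yx0; ring. Qed.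

Lemma K1s u v : x * u + a * v = 0 -> y * v = 0 -> exists s r, u = y * s - a * r /\ v = x * r.
Proof. move=> h1 h2.
have [r Hr] : exists r, v = r * x by apply/(hy v); rewrite mulrC.
have [s Hs] : exists s, u + a * r = s * y.
  by apply/(hx (u + a * r)); rewrite mulrDl -mulrA -Hr mulrC h1.
exists s, r; split; last by rewrite Hr mulrC.
by rewrite mulrC -Hs; ring.
Qed.
Lemma K2s u v : y * u - a * v = 0 -> x * v = 0 -> exists s r, u = x * s + a * r /\ v = y * r.
Proof. move=> h1 h2.
have [r Hr] : exists r, v = r * y by apply/(hx v); rewrite mulrC.
have [s Hs] : exists s, u - a * r = s * x.
  by apply/(hy (u - a * r)); rewrite mulrBl -mulrA -Hr mulrC h1.
exists s, r; split; last by rewrite Hr mulrC.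
by rewrite mulrC -Hs; ring.
Qed.

Lemma K1m (X : 'M[A]_2) : g *m X = 0 -> exists Y, X = e *m Y.
Proof. rewrite /g (mx2E X) mul_mx2 mx2_0 => /mx2_inj [h1 h2 h3 h4].
rewrite mul0r add0r in h3; rewrite mul0r add0r in h4.
have [s1 [r1 [E1 E2]]] := K1s h1 h3.
have [s2 [r2 [E3 E4]]] := K1s h2 h4.
exists (mx2 s1 s2 r1 r2); rewrite /e mul_mx2 E1 E2 E3 E4; congr mx2; ring.
Qed.
Lemma K2m (X : 'M[A]_2) : e *m X = 0 -> exists Y, X = g *m Y.
Proof. rewrite /e (mx2E X) mul_mx2 mx2_0 => /mx2_inj [h1 h2 h3 h4].
rewrite mul0r add0r in h3; rewrite mul0r add0r in h4.
rewrite mulNr in h1; rewrite mulNr in h2.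
have [s1 [r1 [E1 E2]]] := K2s h1 h3.
have [s2 [r2 [E3 E4]]] := K2s h2 h4.
exists (mx2 s1 s2 r1 r2); rewrite /g mul_mx2 E1 E2 E3 E4; congr mx2; ring.
Qed.
Lemma adj_g : adj2 g = e.
Proof. by rewrite /g /e adj2_mx2 oppr0. Qed.
Lemma adj_e : adj2 e = g.
Proof. by rewrite /g /e adj2_mx2 oppr0 opprK. Qed.
Lemma adj2_0 : adj2 0 = 0 :> 'M[A]_2.
Proof. by rewrite mx2_0 adj2_mx2 oppr0. Qed.

Lemma R1m (X : 'M[A]_2) : X *m g = 0 -> exists Y, X = Y *m e.
Proof. move=> H. have : e *m adj2 X = 0 by rewrite -adj_g -adj2M H adj2_0.
move=> /K2m [Y HY]; exists (adj2 Y). by rewrite -adj_g -adj2M -HY adj2K.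
Qed.
Lemma R2m (X : 'M[A]_2) : X *m e = 0 -> exists Y, X = Y *m g.
Proof. move=> H. have : g *m adj2 X = 0 by rewrite -adj_e -adj2M H adj2_0.
move=> /K1m [Y HY]; exists (adj2 Y). by rewrite -adj_e -adj2M -HY adj2K.
Qed.

Variables (G H : lmodType A) (pG : 'cV[A]_2 -> G) (pH : 'cV[A]_2 -> H).
Hypotheses (cG : is_coker g pG) (cH : is_coker e pH).

Definition liftG (f : G -> G) : 'M[A]_2 :=
  epsilon (inhabits 0) (fun al : 'M[A]_2 => forall v, pG (al *m v) = f (pG v)).
Definition nextm (al : 'M[A]_2) : 'M[A]_2 :=
  epsilon (inhabits 0) (fun be : 'M[A]_2 => e *m al = be *m e).
Definition secH (h : H) : 'cV[A]_2 := epsilon (inhabits 0) (fun v => pH v = h).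
Definition Phi (f : G -> G) : H -> H :=
  fun h => pH (adj2 (nextm (liftG f)) *m secH h).

Lemma pG_lin : linear pG. Proof. by case: cG. Qed.
Lemma pH_lin : linear pH. Proof. by case: cH. Qed.

Lemma liftG_spec f : linear f -> forall v, pG (liftG f *m v) = f (pG v).
Proof. move=> Hf; apply: (epsilon_spec (inhabits 0) (fun al : 'M[A]_2 => forall v, pG (al *m v) = f (pG v))).
exact: (coker_lift cG Hf). Qed.
Lemma secH_spec h : pH (secH h) = h.
Proof. apply: (epsilon_spec (inhabits 0) (fun v => pH v = h)). by case: cH => _ s _. Qed.

Lemma lift_pres f al : linear f -> (forall v, pG (al *m v) = f (pG v)) ->
  exists d, al *m g = g *m d.
Proof. move=> Hf Hal; apply: (coker_mx cG) => v.
have -> : pG (al *m g *m v) = f (pG (g *m 1%:M *m v)) by rewrite mulmx1 -mulmxA Hal.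
by rewrite (coker_zero cG) (lin0 Hf). Qed.
Lemma next_ex al : (exists d, al *m g = g *m d) -> exists be, e *m al = be *m e.
Proof. case=> d Hd. apply: R1m. by rewrite -mulmxA Hd mulmxA eg0 mul0mx. Qed.
Lemma adj_pres al be : e *m al = be *m e -> exists Z, adj2 be *m e = e *m Z.
Proof. move=> H1. have : (g *m be) *m e = 0 by rewrite -mulmxA -H1 mulmxA ge0 mul0mx.
move=> /R2m [Y HY]; exists (adj2 Y). by rewrite -adj_g -!adj2M HY. Qed.

Lemma nextm_spec al : (exists d, al *m g = g *m d) -> e *m al = nextm al *m e.
Proof. move=> /next_ex ex. exact: (epsilon_spec (inhabits 0) (fun be : 'M[A]_2 => e *m al = be *m e)). Qed.

Lemma pH_pres be Z v w : adj2 be *m e = e *m Z -> pH v = pH w ->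
  pH (adj2 be *m v) = pH (adj2 be *m w).
Proof. move=> HZ /(coker_eq cH) [z Hz]. apply/(coker_eq cH); exists (Z *m z).
by rewrite -mulmxBr Hz !mulmxA HZ. Qed.

Lemma key f al be : linear f -> (forall v, pG (al *m v) = f (pG v)) ->
  e *m al = be *m e -> forall v, Phi f (pH v) = pH (adj2 be *m v).
Proof. move=> Hf Hal Hbe v.
set al0 := liftG f. have Hal0 := liftG_spec Hf.
have ex0 := lift_pres Hf Hal0. have Hbe0 := nextm_spec ex0.
set be0 := nextm al0 in Hbe0 *.
have [Z0 HZ0] := adj_pres Hbe0.
rewrite /Phi -/al0 -/be0 (pH_pres HZ0 (secH_spec (pH v))).
have [d Hd] : exists d, al0 - al = g *m d.
  apply: (coker_mx cG) => w. by rewrite mulmxBl (linB pG_lin) Hal Hal0 subrr.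
have [Y HY] : exists Y, be0 - be = Y *m g.
  apply: R2m. by rewrite mulmxBl -Hbe -Hbe0 -mulmxBr Hd mulmxA eg0 mul0mx.
apply/(coker_eq cH); exists (adj2 Y *m v).
by rewrite -mulmxBl -adj2B HY adj2M adj_g mulmxA.
Qed.

Lemma lift_all f : linear f -> exists al be, (forall v, pG (al *m v) = f (pG v)) /\ e *m al = be *m e.
Proof. move=> Hf. have [al Hal] := coker_lift cG Hf.
have [be Hbe] := next_ex (lift_pres Hf Hal). by exists al, be.
Qed.

Definition secG (u : G) : 'cV[A]_2 := epsilon (inhabits 0) (fun v => pG v = u).
Lemma secG_spec u : pG (secG u) = u.
Proof. apply: (epsilon_spec (inhabits 0) (fun v => pG v = u)). by case: cG => _ s _. Qed.
Lemma pH_sur h : exists v, pH v = h. Proof. by case: cH => _ s _. Qed.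
Lemma pG_sur u : exists v, pG v = u. Proof. by case: cG => _ s _. Qed.

Lemma Phi_endo f : linear f -> linear (Phi f).
Proof. move=> Hf. have [al [be [Hal Hbe]]] := lift_all Hf. have K := key Hf Hal Hbe.
move=> c h1 h2; have [v1 <-] := pH_sur h1; have [v2 <-] := pH_sur h2.
rewrite -(linZ pH_lin) -(linD pH_lin) !K mulmxDr -scalemxAr (linD pH_lin) (linZ pH_lin).
done. Qed.

Lemma Phi_inj f f' : linear f -> linear f' -> Phi f =1 Phi f' -> f =1 f'.
Proof. move=> Hf Hf' HP.
have [al [be [Hal Hbe]]] := lift_all Hf. have K := key Hf Hal Hbe.
have [al' [be' [Hal' Hbe']]] := lift_all Hf'. have K' := key Hf' Hal' Hbe'.
have [W HW] : exists W, adj2 be - adj2 be' = e *m W.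
  apply: (coker_mx cH) => v. by rewrite mulmxBl (linB pH_lin) -K -K' HP subrr.
have [d Hd] : exists d, al - al' = g *m d.
  apply: K2m. rewrite mulmxBr Hbe Hbe' -mulmxBl.
  have -> : be - be' = adj2 W *m g by rewrite -adj_e -adj2M -HW adj2B !adj2K.
  by rewrite -mulmxA ge0 mulmx0.
move=> u; have [v <-] := pG_sur u. rewrite -Hal -Hal'.
apply/(coker_eq cG); exists (d *m v). by rewrite -mulmxBl Hd mulmxA.
Qed.

Lemma Phi_sur h : linear h -> exists2 f, linear f & Phi f =1 h.
Proof. move=> Hh. have [mu Hmu] := coker_lift cH Hh.
have [N HN] : exists N, mu *m e = e *m N.
  apply: (coker_mx cH) => v.
  by rewrite -mulmxA Hmu (coker_zero1 cH) (lin0 Hh).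
have Hg : g *m adj2 mu = adj2 N *m g by rewrite -adj_e -!adj2M HN.
have [al Hal] : exists al, adj2 mu *m e = e *m al.
  apply: K1m. by rewrite mulmxA Hg -mulmxA ge0 mulmx0.
have [d Hd] : exists d, al *m g = g *m d.
  apply: K2m. by rewrite mulmxA -Hal -mulmxA eg0 mulmx0.
pose f := fun u => pG (al *m secG u).
have Hf1 : forall v, f (pG v) = pG (al *m v).
  move=> v; rewrite /f. have /(coker_eq cG) [w Hw] := secG_spec (pG v).
  apply/(coker_eq cG); exists (d *m w). by rewrite -mulmxBr Hw !mulmxA Hd.
have Hf : linear f.
  move=> c u1 u2; have [v1 <-] := pG_sur u1; have [v2 <-] := pG_sur u2.
  by rewrite -(linZ pG_lin) -(linD pG_lin) !Hf1 mulmxDr -scalemxAr (linD pG_lin) (linZ pG_lin).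
exists f => // h0. have [v <-] := pH_sur h0.
by rewrite (key Hf (fun v => esym (Hf1 v)) (esym Hal)) adj2K Hmu.
Qed.

Lemma lin_add (M : lmodType A) (f f' : M -> M) : linear f -> linear f' -> linear (fun m => f m + f' m).
Proof. move=> Hf Hf'; apply: mk_lin => [u v|c u].
  by rewrite (linD Hf) (linD Hf') addrACA.
by rewrite (linZ Hf) (linZ Hf') scalerDr. Qed.
Lemma lin_scale (M : lmodType A) c (f : M -> M) : linear f -> linear (fun m => c *: f m).
Proof. move=> Hf; apply: mk_lin => [u v|c' u].
  by rewrite (linD Hf) scalerDr.
by rewrite (linZ Hf) !scalerA mulrC. Qed.
Lemma lin_id (M : lmodType A) : linear (@id M). Proof. by []. Qed.
Lemma lin_comp (M : lmodType A) (f f' : M -> M) : linear f -> linear f' -> linear (f \o f').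
Proof. by move=> Hf Hf' c u v /=; rewrite Hf' Hf. Qed.

Lemma Phi_iso : op_algebra_iso Phi.
Proof.
split; first exact: Phi_endo.
split; first by move=> f f' _ _ /functional_extensionality ->.
split; first exact: Phi_inj.
split; first exact: Phi_sur.
split.
  move=> f f' Hf Hf' h.
  have [al [be [Hal Hbe]]] := lift_all Hf. have K := key Hf Hal Hbe.
  have [al' [be' [Hal' Hbe']]] := lift_all Hf'. have K' := key Hf' Hal' Hbe'.
  have [v <-] := pH_sur h.
  have Hs : forall v, pG ((al + al') *m v) = f (pG v) + f' (pG v).
    by move=> w; rewrite mulmxDl (linD pG_lin) Hal Hal'.
  rewrite (key (lin_add Hf Hf') Hs (be := be + be')); last by rewrite mulmxDr mulmxDl Hbe Hbe'.
  by rewrite adj2D mulmxDl (linD pH_lin) K K'.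
split.
  move=> c f Hf h.
  have [al [be [Hal Hbe]]] := lift_all Hf. have K := key Hf Hal Hbe.
  have [v <-] := pH_sur h.
  have Hs : forall v, pG ((c *: al) *m v) = c *: f (pG v).
    by move=> w; rewrite -scalemxAl (linZ pG_lin) Hal.
  rewrite (key (lin_scale c Hf) Hs (be := c *: be)); last by rewrite -scalemxAr -scalemxAl Hbe.
  by rewrite adj2Z -scalemxAl (linZ pH_lin) K.
split.
  move=> h. have [v <-] := pH_sur h.
  have Hs : forall w, pG (1%:M *m w) = id (pG w) by move=> w; rewrite mul1mx.
  have Hb : e *m 1%:M = 1%:M *m e by rewrite mul1mx mulmx1.
  by rewrite (key (@lin_id G) Hs Hb) adj2_1 mul1mx.
move=> f f' Hf Hf' h.
have [al [be [Hal Hbe]]] := lift_all Hf. have K := key Hf Hal Hbe.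
have [al' [be' [Hal' Hbe']]] := lift_all Hf'. have K' := key Hf' Hal' Hbe'.
have [v <-] := pH_sur h.
have Hs : forall v, pG ((al *m al') *m v) = (f \o f') (pG v).
  by move=> w /=; rewrite -mulmxA Hal Hal'.
rewrite (key (lin_comp Hf Hf') Hs (be := be *m be')); last by rewrite mulmxA Hbe -!mulmxA Hbe'.
by rewrite adj2M -mulmxA /= K K'.
Qed.

End Main.
Lemma indec_transfer (M N : lmodType A) (Ph : (M -> M) -> (N -> N)) :
  op_algebra_iso Ph -> indecomposable M -> indecomposable N.
Proof.
case=> [Pend [Pcong [Pinj [Psur [Padd [Pscale [Pid Pcomp]]]]]]].
case=> [[m0 Hm0] Hdec].
pose zero := fun m : M => 0 *: id m.
have Hz : endo zero by apply: lin_scale; apply: lin_id.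
have Pzero : forall n, Ph zero n = 0.
  by move=> n; rewrite (Pscale 0 id (@lin_id M)) scale0r.
split.
  case: (classic (exists n : N, n <> 0)) => // Hn; exfalso.
  have H0 : forall n : N, n = 0.
    by move=> n; apply: NNPP => Hne; apply: Hn; exists n.
  have : id =1 zero.
    apply: (Pinj _ _ (@lin_id M) Hz).
    by move=> n; rewrite Pzero Pid; apply: H0.
  by move/(_ m0); rewrite /zero scale0r.
move=> S T [S0 SD SZ] [T0 TD TZ] Hint Hsum.
have SB : forall u v, S u -> S v -> S (u - v).
  by move=> u v Su Sv; apply: SD => //; rewrite -scaleN1r; apply: SZ.
have TB : forall u v, T u -> T v -> T (u - v).
  by move=> u v Tu Tv; apply: TD => //; rewrite -scaleN1r; apply: TZ.
pose pr := fun n : N => epsilon (inhabits (0 : N)) (fun s : N => S s /\ T (n - s)).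
have pr_spec : forall n, S (pr n) /\ T (n - pr n).
  move=> n; apply: (epsilon_spec (inhabits (0 : N)) (fun s : N => S s /\ T (n - s))).
  case: (Hsum n) => s Ss [t Tt ->]. exists s; split => //. by rewrite [s + t]addrC addrK.
have uniq : forall n s : N, S s -> T (n - s) -> pr n = s.
  move=> n s Ss Ts. have [S1 T1] := pr_spec n.
  apply/eqP; rewrite -subr_eq0; apply/eqP; apply: Hint; first exact: SB.
  have -> : pr n - s = (n - s) - (n - pr n).
    by rewrite opprB addrCA addrAC subrr add0r.
  exact: TB.
have pr_lin : endo pr.
  move=> c n1 n2. apply: uniq.
    apply: SD; [apply: SZ; exact: (pr_spec n1).1 | exact: (pr_spec n2).1].
  have -> : c *: n1 + n2 - (c *: pr n1 + pr n2) = c *: (n1 - pr n1) + (n2 - pr n2).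
    by rewrite scalerBr opprD addrACA.
  apply: TD; [apply: TZ; exact: (pr_spec n1).2 | exact: (pr_spec n2).2].
have prS : forall s : N, S s -> pr s = s by move=> s Ss; apply: uniq; rewrite ?subrr.
have prT : forall t : N, T t -> pr t = 0 by move=> t Tt; apply: uniq; rewrite ?subr0.
have [f Hf Hfp] := Psur pr pr_lin.
have ff : f \o f =1 f.
  apply: Pinj => //; first exact: lin_comp.
  move=> n; rewrite Pcomp //= !Hfp. by apply: prS; exact: (pr_spec n).1.
have ff' : forall m, f (f m) = f m := ff.
have fS : submodule (fun m => f m = m).
  split; first exact: (lin0 Hf).
    by move=> u v Hu Hv; rewrite (linD Hf) Hu Hv.
  by move=> c u Hu; rewrite (linZ Hf) Hu.
have fT : submodule (fun m => f m = 0).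
  split; first exact: (lin0 Hf).
    by move=> u v Hu Hv; rewrite (linD Hf) Hu Hv addr0.
  by move=> c u Hu; rewrite (linZ Hf) Hu scaler0.
case: (Hdec _ _ fS fT).
- by move=> m -> ->.
- move=> m; exists (f m); first exact: (ff m).
  exists (m - f m); last by rewrite addrC addrNK.
  by rewrite (linB Hf) (ff' m) subrr.
- move=> H1; left => s Ss.
  have fz : f =1 zero.
    move=> m; rewrite /zero scale0r; apply: H1; exact: (ff m).
  by rewrite -(prS s Ss) -Hfp (Pcong _ _ Hf Hz fz) Pzero.
- move=> H1; right => t Tt.
  have fid : f =1 id.
    move=> m; apply/eqP; rewrite -subr_eq0; apply/eqP; apply: H1.
    by rewrite (linB Hf) (ff' m) subrr.
  by rewrite -(prT t Tt) -Hfp (Pcong _ _ Hf (@lin_id M) fid) Pid.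
Qed.

End Mx.

Theorem corollary4p3 (A : comNzRingType) (x y a : A)
    (G H : lmodType A) (pG : 'cV[A]_2 -> G) (pH : 'cV[A]_2 -> H) :
  noetherian_ring A -> local_ring A -> exact_pair x y ->
  is_coker (gamma_mx x y a) pG -> is_coker (eta_mx x y a) pH ->
  opEnd_iso_End G H /\ (indecomposable G <-> indecomposable H).
Proof.
move=> _ _ [_ _ hx hy] cG cH.
have iso1 : opEnd_iso_End G H by eexists; exact: (Phi_iso hx hy cG cH).
have cG' : is_coker (mx2 x (- - a) 0 y) pG by rewrite opprK.
have iso2 : opEnd_iso_End H G by eexists; exact: (Phi_iso hy hx cH cG').
split => //; case: iso1 => P1 HP1; case: iso2 => P2 HP2; split; [exact: (indec_transfer HP1) | exact: (indec_transfer HP2)].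
Qed.
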